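(* \[ \sum_{k=1}^{\infty}(-1)^k(4k+1)\frac{(\tfrac{1}{2})_k^3}{k!^3}\sum_{i=1}^{2k}\frac{(-1)^i}{i^2}=\frac{\pi}{12}. \]
   Context: For a complex number $x$ and a nonnegative integer $n$, $(x)_n=\Gamma(x+n)/\Gamma(x)=x(x+1)\cdots(x+n-1)$ denotes the shifted factorial (Pochhammer symbol), with $(x)_0=1$. The series is understood as the limit of its partial sums. *)

(* Defs.v *)
From Stdlib Require Import Reals Arith.Factorial.
Open Scope R_scope.

Fixpoint poch (x : R) (n : nat) : R :=
  match n with
  | O => 1
  | S m => poch x m * (x + INR m)
  end.

Definition inner_sum (k : nat) : R :=
  sum_f 1 (2 * k) (fun i => (-1) ^ i / (INR i) ^ 2).

Definition term (k : nat) : R :=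
  (-1) ^ k * (4 * INR k + 1) * (poch (1/2) k) ^ 3 / (INR (fact k)) ^ 3
  * inner_sum k.

Fixpoint partial_sum (N : nat) : R :=
  match N with
  | O => 0
  | S m => partial_sum m + term (S m)
  end.

(* Main.v *)
Require Import Defs.
From Stdlib Require Import Reals Lra Lia Field Arith.Factorial Arith.Compare_dec.
From Coquelicot Require Import Coquelicot.
Open Scope R_scope.

Definition a (k : nat) : R := poch (1/2) k / INR (fact k).
Definition E (k : nat) : R := (-1) ^ k * a k ^ 3.
Fixpoint H (k : nat) : R :=
  match k with O => 0 | S m => H m + 1 / (2 * INR m + 2) ^ 2 - 1 / (2 * INR m + 1) ^ 2 end.
Fixpoint lam (n k : nat) : R :=
  match k with O => 1 | S m => lam n m * (INR n - INR m) / (INR n + 3/2 + INR m) end.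
Definition c (n : nat) : R := (2 * INR n + 1) * a n ^ 2.
Fixpoint Z (n : nat) : R := match n with O => 0 | S m => Z m + 1 / (INR m + 1) ^ 2 end.
Definition F (n k : nat) : R := (4 * INR k + 1) * E k * lam n k.
Definition rho (n : nat) : R := (2 * INR n + 1) * (2 * INR n + 3) / (4 * (INR n + 1) ^ 2).
Definition Gt (n k : nat) : R := - (INR k ^ 3 * (2 * INR n + 2 * INR k + 3)) / (INR n + 1) ^ 3 * E k * lam (S n) k.
Definition gt (n k : nat) : R := - (INR k * (2 * INR n + 2 * INR k + 3)) / (INR n + 1) ^ 3 * E k * lam (S n) k.
Definition Q (n k : nat) : R := 4 * H k * Gt n k - gt n k.

Lemma lam_S n k : lam n (S k) = lam n k * (INR n - INR k) / (INR n + 3/2 + INR k).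
Proof. reflexivity. Qed.
Lemma H_S k : H (S k) = H k + 1 / (2 * INR k + 2) ^ 2 - 1 / (2 * INR k + 1) ^ 2.
Proof. reflexivity. Qed.

Lemma a_S k : a (S k) = a k * (1/2 + INR k) / (INR k + 1).
Proof.
  unfold a; simpl poch. rewrite fact_simpl, mult_INR, S_INR.
  assert (0 < INR (fact k)) by (apply lt_0_INR, lt_O_fact).
  assert (0 <= INR k) by apply pos_INR.
  field. split; lra.
Qed.

Lemma E_S k : E (S k) = E k * (- (2 * INR k + 1) ^ 3 / (2 * INR k + 2) ^ 3).
Proof.
  unfold E. rewrite a_S. simpl pow.
  assert (0 <= INR k) by apply pos_INR. field. lra.
Qed.

Lemma lam_shift n k : lam n k * ((INR n + 1) * (INR n + 3/2)) =
   lam (S n) k * ((INR n + 1 - INR k) * (INR n + 3/2 + INR k)).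
Proof.
  induction k as [|k IH].
  - simpl; ring.
  - rewrite !lam_S, !S_INR.
    assert (0 <= INR k) by apply pos_INR. assert (0 <= INR n) by apply pos_INR.
    apply (Rmult_eq_reg_r (INR n + 3/2 + INR k)); [| lra].
    apply (Rmult_eq_reg_r (INR n + 1 + 3/2 + INR k)); [| lra].
    transitivity (lam n k * (INR n + 1) * (INR n + 3 / 2) * (INR n - INR k) * (INR n + 1 + 3 / 2 + INR k)).
    { field. lra. }
    transitivity (lam (S n) k * ((INR n + 1 - INR k) * (INR n + 3 / 2 + INR k)) * (INR n - INR k) * (INR n + 1 + 3 / 2 + INR k)).
    { rewrite <- IH. ring. }
    field. lra.
Qed.

Lemma lam_zero n k : (n < k)%nat -> lam n k = 0.
Proof.
  induction 1; rewrite lam_S.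
  - replace (INR n - INR n) with 0 by ring. unfold Rdiv. ring.
  - rewrite IHle. unfold Rdiv; ring.
Qed.

Lemma W0 n k : F (S n) k - rho n * F n k = Gt n (S k) - Gt n k.
Proof.
  unfold F, Gt, rho. rewrite E_S. rewrite lam_S.
  assert (HL : lam n k = lam (S n) k * ((INR n + 1 - INR k) * (INR n + 3/2 + INR k)) / ((INR n + 1) * (INR n + 3/2))).
  { rewrite <- lam_shift. assert (0 <= INR n) by apply pos_INR. field. lra. }
  rewrite HL. rewrite !S_INR.
  assert (0 <= INR k) by apply pos_INR. assert (0 <= INR n) by apply pos_INR.
  field. lra.
Qed.

Lemma W2 n k : 4 * H k * F (S n) k - rho n * (4 * H k * F n k) - F (S n) k / (INR n + 1) ^ 2
   = Q n (S k) - Q n k.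
Proof.
  unfold Q, F, Gt, gt, rho. rewrite E_S. rewrite lam_S. rewrite H_S.
  assert (HL : lam n k = lam (S n) k * ((INR n + 1 - INR k) * (INR n + 3/2 + INR k)) / ((INR n + 1) * (INR n + 3/2))).
  { rewrite <- lam_shift. assert (0 <= INR n) by apply pos_INR. field. lra. }
  rewrite HL. rewrite !S_INR.
  assert (0 <= INR k) by apply pos_INR. assert (0 <= INR n) by apply pos_INR.
  field. lra.
Qed.

Lemma Z_S n : Z (S n) = Z n + 1 / (INR n + 1) ^ 2.
Proof. reflexivity. Qed.

Lemma tele (f : nat -> R) N : sum_f_R0 (fun k => f (S k) - f k) N = f (S N) - f O.
Proof. induction N; simpl; [ring | rewrite IHN; ring]. Qed.

Lemma c_S n : c (S n) = rho n * c n.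
Proof.
  unfold c, rho. rewrite a_S, S_INR. assert (0 <= INR n) by apply pos_INR.
  field. lra.
Qed.

Lemma I0 n : sum_f_R0 (F n) n = c n.
Proof.
  induction n as [|n IH].
  - simpl. unfold F, E, c, a. simpl. field.
  - assert (Hs : sum_f_R0 (F (S n)) (S n) =
       sum_f_R0 (fun k => rho n * F n k + (Gt n (S k) - Gt n k)) (S n)).
    { apply sum_eq. intros k _. rewrite <- W0. ring. }
    rewrite Hs, sum_plus, tele.
    rewrite (sum_eq _ (fun k => F n k * rho n)) by (intros; ring).
    rewrite <- scal_sum. simpl (sum_f_R0 (F n) (S n)). rewrite IH.
    unfold F at 1. rewrite lam_zero by lia.
    unfold Gt. rewrite (lam_zero (S n) (S (S n))) by lia.
    rewrite c_S. simpl (INR 0). assert (0 <= INR n) by apply pos_INR. field. lra.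
Qed.

Lemma I2 n : sum_f_R0 (fun k => 4 * H k * F n k) n = c n * Z n.
Proof.
  induction n as [|n IH].
  - simpl. ring.
  - assert (Hs : sum_f_R0 (fun k => 4 * H k * F (S n) k) (S n) =
       sum_f_R0 (fun k => (rho n * (4 * H k * F n k) + F (S n) k / (INR n + 1) ^ 2)
                 + (Q n (S k) - Q n k)) (S n)).
    { apply sum_eq. intros k _. rewrite <- W2. ring. }
    rewrite Hs, sum_plus, tele, sum_plus.
    rewrite (sum_eq (fun k => rho n * _) (fun k => (4 * H k * F n k) * rho n)) by (intros; ring).
    rewrite <- scal_sum.
    rewrite (sum_eq (fun k => F (S n) k / _) (fun k => F (S n) k * / (INR n + 1) ^ 2)) by (intros; unfold Rdiv; ring).
    rewrite <- scal_sum, I0.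
    simpl (sum_f_R0 (fun k => 4 * H k * F n k) (S n)). rewrite IH.
    unfold F at 1. rewrite lam_zero by lia.
    unfold Q, Gt, gt. rewrite (lam_zero (S n) (S (S n))) by lia.
    rewrite c_S. simpl (H 0). simpl (INR 0). rewrite Z_S.
    assert (0 <= INR n) by apply pos_INR. field. lra.
Qed.

Lemma poch_pos n : 0 < poch (1/2) n.
Proof. induction n; simpl; [lra | apply Rmult_lt_0_compat; [auto | pose proof (pos_INR n); lra]]. Qed.

Lemma a_pos n : 0 < a n.
Proof. unfold a. apply Rdiv_lt_0_compat; [apply poch_pos | apply lt_0_INR, lt_O_fact]. Qed.

Lemma a0 : a 0 = 1.
Proof. unfold a. simpl. field. Qed.


Lemma inv_cv C : Un_cv (fun n => C / (INR n + 1)) 0.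
Proof.
  intros eps he.
  destruct (archimed_cor1 (eps / (Rabs C + 1))) as [N [hN hN0]].
  { apply Rdiv_lt_0_compat; [lra | pose proof (Rabs_pos C); lra]. }
  exists N. intros n hn. unfold Rdist. rewrite Rminus_0_r.
  assert (hNn : INR N <= INR n) by (apply le_INR; lia).
  assert (0 < INR N) by (apply lt_0_INR; lia).
  unfold Rdiv. rewrite Rabs_mult, Rabs_inv, (Rabs_right (INR n + 1)) by lra.
  assert (/ (INR n + 1) <= / INR N) by (apply Rinv_le_contravar; lra).
  pose proof (Rabs_pos C).
  apply Rle_lt_trans with (Rabs C * / INR N).
  - apply Rmult_le_compat_l; lra.
  - apply Rle_lt_trans with (Rabs C * (eps / (Rabs C + 1))).
    + apply Rmult_le_compat_l; lra.
    + unfold Rdiv. rewrite <- Rmult_assoc.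
      apply Rlt_le_trans with ((Rabs C + 1) * eps * / (Rabs C + 1)).
      * apply Rmult_lt_compat_r; [apply Rinv_0_lt_compat; lra | nra].
      * right. field. lra.
Qed.

Lemma squeeze (u v : nat -> R) l N0 :
  (forall n, (N0 <= n)%nat -> Rabs (u n - l) <= v n) -> Un_cv v 0 -> Un_cv u l.
Proof.
  intros h hv eps he. destruct (hv eps he) as [N hN]. exists (max N N0).
  intros n hn. unfold Rdist. apply Rle_lt_trans with (v n).
  - apply h; lia.
  - specialize (hN n ltac:(lia)). unfold Rdist in hN. rewrite Rminus_0_r in hN.
    apply Rle_lt_trans with (Rabs (v n)); [apply Rle_abs | exact hN].
Qed.

Lemma INR_S_match m : (match m with O => 1 | S _ => INR m + 1 end) = INR m + 1.
Proof. destruct m; simpl; ring. Qed.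

Lemma der1 (m : nat) x : is_derive (fun t => sin t * cos t ^ (S m)) x
   ((INR m + 2) * cos x ^ (S (S m)) - (INR m + 1) * cos x ^ m).
Proof.
  auto_derive. { exact I. } rewrite INR_S_match.
  assert (Hs : sin x * sin x = 1 - cos x * cos x) by (pose proof (sin2_cos2 x); unfold Rsqr in *; lra).
  transitivity (cos x * cos x * cos x ^ m - (sin x * sin x) * (INR m + 1) * cos x ^ m). { ring. }
  rewrite Hs. simpl. ring.
Qed.

Definition Ic (m : nat) : R := RInt (fun t => cos t ^ m) 0 (PI/2).

Lemma ex_cos m : ex_RInt (fun t => cos t ^ m) 0 (PI/2).
Proof. apply (ex_RInt_continuous (V := R_CompleteNormedModule)); intros; apply (ex_derive_continuous (fun t => cos t ^ m)); auto_derive; exact I. Qed.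

Lemma RInt_lin (f g : R -> R) a b (p q : R) : ex_RInt f a b -> ex_RInt g a b ->
  RInt (fun x => p * f x - q * g x) a b = p * RInt f a b - q * RInt g a b.
Proof.
  intros hf hg. apply (is_RInt_unique (V := R_CompleteNormedModule)).
  apply (is_RInt_minus (V := R_NormedModule) (fun x => scal p (f x)) (fun x => scal q (g x)));
  apply (is_RInt_scal (V := R_NormedModule)); apply (RInt_correct (V := R_CompleteNormedModule)); assumption.
Qed.

Lemma FTC (f df : R -> R) a b :
  (forall x, Rmin a b <= x <= Rmax a b -> is_derive f x (df x)) ->
  (forall x, Rmin a b <= x <= Rmax a b -> ex_derive df x) ->
  RInt df a b = f b - f a.
Proof.
  intros h1 h2. apply (is_RInt_unique (V := R_CompleteNormedModule)).
  apply (is_RInt_derive (V := R_CompleteNormedModule) f df a b h1).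
  intros x hx. apply (ex_derive_continuous df x (h2 x hx)).
Qed.

Lemma Ic_rec m : (INR m + 2) * Ic (S (S m)) = (INR m + 1) * Ic m.
Proof.
  assert (h := FTC (fun t => sin t * cos t ^ (S m))
     (fun x => (INR m + 2) * cos x ^ (S (S m)) - (INR m + 1) * cos x ^ m) 0 (PI/2)
     (fun x _ => der1 m x) ltac:(intros; auto_derive; exact I)).
  rewrite RInt_lin in h by apply ex_cos.
  rewrite cos_PI2, sin_0, pow_i in h by lia. unfold Ic. lra.
Qed.

Lemma Ic0 : Ic 0 = PI/2.
Proof.
  unfold Ic. rewrite (FTC (fun t => t) (fun t => cos t ^ 0)).
  - ring.
  - intros; auto_derive; [exact I | simpl; ring].
  - intros; auto_derive; exact I.
Qed.

Lemma Ic1 : Ic 1 = 1.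
Proof.
  unfold Ic. rewrite (FTC sin (fun t => cos t ^ 1)).
  - rewrite sin_PI2, sin_0. ring.
  - intros; auto_derive; [exact I | simpl; ring].
  - intros; auto_derive; exact I.
Qed.







Lemma Ic_even n : Ic (2 * n) = PI / 2 * a n.
Proof.
  induction n as [|n IH].
  - change (2 * 0)%nat with 0%nat. rewrite a0, Ic0. ring.
  - replace (2 * S n)%nat with (S (S (2 * n))) by lia.
    pose proof (Ic_rec (2 * n)) as R. rewrite mult_INR in R. replace (INR 2) with 2 in R by (simpl; ring).
    rewrite a_S. rewrite IH in R. pose proof (pos_INR n).
    apply (Rmult_eq_reg_l (2 * INR n + 2)); [| lra]. rewrite R. field. lra.
Qed.

Lemma Ic_odd n : Ic (S (2 * n)) = 1 / ((2 * INR n + 1) * a n).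
Proof.
  induction n as [|n IH].
  - change (S (2 * 0))%nat with 1%nat. rewrite a0, Ic1. simpl. field.
  - replace (S (2 * S n))%nat with (S (S (S (2 * n)))) by lia.
    pose proof (Ic_rec (S (2 * n))) as R. rewrite S_INR, mult_INR in R. replace (INR 2) with 2 in R by (simpl; ring).
    rewrite a_S. rewrite IH in R. pose proof (pos_INR n). pose proof (a_pos n).
    rewrite S_INR.
    apply (Rmult_eq_reg_l (2 * INR n + 1 + 2)); [| lra]. rewrite R. field. lra.
Qed.

Lemma cos_01 x : 0 <= x <= PI/2 -> 0 <= cos x <= 1.
Proof. intros [h1 h2]. split; [apply cos_ge_0; lra | apply COS_bound]. Qed.

Lemma Ic_decr m : Ic (S m) <= Ic m.
Proof.
  unfold Ic. apply RInt_le; try apply ex_cos.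
  - pose proof PI_RGT_0. lra.
  - intros x hx. destruct (cos_01 x) as [h1 h2]; [lra|].
    simpl. rewrite <- (Rmult_1_l (cos x ^ m)) at 2. apply Rmult_le_compat_r; [apply pow_le|]; lra.
Qed.

Lemma c_lower n : 2 / PI <= c n.
Proof.
  pose proof (Ic_decr (2 * n)) as h. rewrite Ic_even, Ic_odd in h.
  pose proof (a_pos n). pose proof (pos_INR n). pose proof PI_RGT_0.
  unfold c.
  assert (h2 : 1 <= PI / 2 * ((2 * INR n + 1) * a n ^ 2)).
  { apply Rmult_le_compat_r with (r := (2 * INR n + 1) * a n) in h; [|nra].
    replace (1 / ((2 * INR n + 1) * a n) * ((2 * INR n + 1) * a n)) with 1 in h by (field; lra).
    nra. }
  apply Rmult_le_reg_l with (PI / 2); [lra|]. replace (PI / 2 * (2 / PI)) with 1 by (field; lra). exact h2.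
Qed.

Lemma c_upper n : c (S n) <= 2 / PI * (1 + 1 / (2 * INR n + 2)).
Proof.
  pose proof (Ic_decr (S (2 * n))) as h.
  replace (S (S (2 * n))) with (2 * S n)%nat in h by lia.
  rewrite Ic_even, Ic_odd in h. rewrite a_S in h.
  pose proof (a_pos n). pose proof (pos_INR n). pose proof PI_RGT_0.
  unfold c. rewrite a_S, S_INR.
  assert (h2 : PI / 2 * (a n * (1/2 + INR n) / (INR n + 1)) * ((2 * INR n + 1) * a n) <= 1).
  { apply Rmult_le_compat_r with (r := (2 * INR n + 1) * a n) in h; [|nra].
    replace (1 / ((2 * INR n + 1) * a n) * ((2 * INR n + 1) * a n)) with 1 in h by (field; lra).
    exact h. }
  apply Rmult_le_reg_l with (PI / 2); [lra|].
  replace (PI / 2 * (2 / PI * (1 + 1 / (2 * INR n + 2)))) with ((2 * INR n + 3) / (2 * INR n + 2)) by (field; lra).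
  replace (PI / 2 * ((2 * (INR n + 1) + 1) * (a n * (1 / 2 + INR n) / (INR n + 1)) ^ 2))
    with (PI / 2 * (a n * (1/2 + INR n) / (INR n + 1)) * ((2 * INR n + 1) * a n) * ((2 * INR n + 3) / (2 * INR n + 2))) by (field; lra).
  rewrite <- (Rmult_1_l ((2 * INR n + 3) / (2 * INR n + 2))) at 2.
  apply Rmult_le_compat_r; [apply Rlt_le, Rdiv_lt_0_compat; lra | exact h2].
Qed.

Lemma wallis : Un_cv c (2 / PI).
Proof.
  apply (squeeze c (fun n => (2 / PI) / (INR n + 1)) _ 1); [| apply inv_cv].
  intros n hn. destruct n as [|m]; [lia|].
  pose proof (c_lower (S m)). pose proof (c_upper m). pose proof (pos_INR m). pose proof PI_RGT_0.
  rewrite Rabs_right by lra. rewrite S_INR.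
  assert (2 / PI * (1 + 1 / (2 * INR m + 2)) - 2 / PI <= 2 / PI / (INR m + 1 + 1)); [|lra].
  replace (2 / PI * (1 + 1 / (2 * INR m + 2)) - 2 / PI) with ((2 / PI) * / (2 * INR m + 2)) by (field; lra).
  unfold Rdiv at 3. apply Rmult_le_compat_l; [apply Rlt_le, Rdiv_lt_0_compat; lra|].
  apply Rinv_le_contravar; lra.
Qed.

Lemma der2 (m : nat) x : is_derive (fun t => t * cos t ^ (S (S m)) + (INR m + 2) / 2 * (t ^ 2 * sin t * cos t ^ (S m))) x
   (cos x ^ (S (S m)) + ((INR m + 2) ^ 2 / 2 * (x ^ 2 * cos x ^ (S (S m))) - (INR m + 2) * (INR m + 1) / 2 * (x ^ 2 * cos x ^ m))).
Proof.
  auto_derive. { exact I. } rewrite ?INR_S_match.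
  assert (Hs : sin x * sin x = 1 - cos x * cos x) by (pose proof (sin2_cos2 x); unfold Rsqr in *; lra).
  transitivity (cos x * (cos x * cos x ^ m) - x * sin x * ((INR m + 2) * (cos x * cos x ^ m))
    + (INR m + 2) / 2 * (2 * x * sin x * cos x * cos x ^ m + x * x * cos x * cos x * cos x ^ m
       - x * x * (sin x * sin x) * (INR m + 1) * cos x ^ m)). { field. }
  rewrite Hs. simpl. field.
Qed.

Lemma RInt_plus' (f g : R -> R) a b : ex_RInt f a b -> ex_RInt g a b ->
  RInt (fun x => f x + g x) a b = RInt f a b + RInt g a b.
Proof.
  intros hf hg. apply (is_RInt_unique (V := R_CompleteNormedModule)).
  apply (is_RInt_plus (V := R_NormedModule) f g);
  apply (RInt_correct (V := R_CompleteNormedModule)); assumption.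
Qed.

Definition Jc (n : nat) : R := RInt (fun t => t ^ 2 * cos t ^ (2 * n)) 0 (PI/2).

Lemma ex_J m : ex_RInt (fun t => t ^ 2 * cos t ^ m) 0 (PI/2).
Proof. apply (ex_RInt_continuous (V := R_CompleteNormedModule)); intros; apply (ex_derive_continuous (fun t => t ^ 2 * cos t ^ m)); auto_derive; exact I. Qed.

Lemma ex_lin (f g : R -> R) a b p q : ex_RInt f a b -> ex_RInt g a b -> ex_RInt (fun x => p * f x - q * g x) a b.
Proof.
  intros hf hg. exists (p * RInt f a b - q * RInt g a b).
  apply (is_RInt_minus (V := R_NormedModule) (fun x => scal p (f x)) (fun x => scal q (g x)));
  apply (is_RInt_scal (V := R_NormedModule)); apply (RInt_correct (V := R_CompleteNormedModule)); assumption.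
Qed.

Lemma J_rec_gen m : Ic (S (S m)) + ((INR m + 2) ^ 2 / 2 * RInt (fun x => x ^ 2 * cos x ^ (S (S m))) 0 (PI/2)
   - (INR m + 2) * (INR m + 1) / 2 * RInt (fun x => x ^ 2 * cos x ^ m) 0 (PI/2)) = 0.
Proof.
  assert (h := FTC (fun t => t * cos t ^ (S (S m)) + (INR m + 2) / 2 * (t ^ 2 * sin t * cos t ^ (S m)))
     (fun x => cos x ^ (S (S m)) + ((INR m + 2) ^ 2 / 2 * (x ^ 2 * cos x ^ (S (S m))) - (INR m + 2) * (INR m + 1) / 2 * (x ^ 2 * cos x ^ m))) 0 (PI/2)
     (fun x _ => der2 m x)).
  assert (h' : forall x, Rmin 0 (PI / 2) <= x <= Rmax 0 (PI / 2) -> ex_derive (fun x0 : R =>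
        cos x0 ^ S (S m) + ((INR m + 2) ^ 2 / 2 * (x0 ^ 2 * cos x0 ^ S (S m)) -
         (INR m + 2) * (INR m + 1) / 2 * (x0 ^ 2 * cos x0 ^ m))) x).
  { clear h. intros. auto_derive. exact I. }
  specialize (h h'). clear h'.
  rewrite (RInt_plus' (fun x => cos x ^ (S (S m)))) in h; [| apply ex_cos | apply ex_lin; apply ex_J].
  rewrite (RInt_lin (fun x => x ^ 2 * cos x ^ (S (S m))) (fun x => x ^ 2 * cos x ^ m)) in h; [| apply ex_J | apply ex_J].
  rewrite cos_PI2, sin_0, !pow_i in h by lia.
  unfold Ic. rewrite h. ring.
Qed.


Lemma J_rec n : Ic (S (S (2 * n))) + (2 * (INR n + 1) ^ 2 * Jc (S n) - (INR n + 1) * (2 * INR n + 1) * Jc n) = 0.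
Proof.
  pose proof (J_rec_gen (2 * n)) as h. rewrite mult_INR in h. replace (INR 2) with 2 in h by (simpl; ring).
  unfold Jc. replace (2 * S n)%nat with (S (S (2 * n))) by lia.
  set (A := RInt (fun x : R => x ^ 2 * cos x ^ S (S (2 * n))) 0 (PI / 2)) in *. set (B := RInt (fun x : R => x ^ 2 * cos x ^ (2 * n)) 0 (PI / 2)) in *. clearbody A B. change R in A. change R in B. match type of h with ?L = _ => transitivity L; [ | exact h] end. field.
Qed.

Lemma J0 : Jc 0 = PI ^ 3 / 24.
Proof.
  unfold Jc. rewrite (FTC (fun t => t ^ 3 / 3) (fun t => t ^ 2 * cos t ^ (2 * 0))).
  - field.
  - intros; auto_derive; [exact I | simpl; field].
  - intros; auto_derive; exact I.
Qed.

Lemma tcos t : 0 <= t <= PI / 2 -> t * cos t <= sin t.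
Proof.
  intros ht.
  assert (h : RInt (fun s => s * sin s) 0 t = (sin t - t * cos t) - (sin 0 - 0 * cos 0)).
  { apply (FTC (fun s => sin s - s * cos s) (fun s => s * sin s)).
    - intros; auto_derive; [exact I | ring].
    - intros; auto_derive; exact I. }
  rewrite sin_0 in h.
  assert (0 <= RInt (fun s => s * sin s) 0 t).
  { apply RInt_ge_0; [lra | |].
    - apply (ex_RInt_continuous (V := R_CompleteNormedModule)); intros.
      apply (ex_derive_continuous (fun s => s * sin s)); auto_derive; exact I.
    - intros x hx. pose proof PI_RGT_0. apply Rmult_le_pos; [lra | apply sin_ge_0; lra]. }
  lra.
Qed.

Lemma J_nonneg n : 0 <= Jc n.
Proof.
  unfold Jc. pose proof PI_RGT_0. apply RInt_ge_0; [lra | apply ex_J |].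
  intros x hx. apply Rmult_le_pos; [apply pow2_ge_0 | apply pow_le]. apply cos_01; lra.
Qed.

Lemma J_upper n : Jc (S n) <= Ic (2 * n) - Ic (S (S (2 * n))).
Proof.
  unfold Jc, Ic. replace (2 * S n)%nat with (S (S (2 * n))) by lia.
  replace (RInt (fun t => cos t ^ (2 * n)) 0 (PI / 2) - RInt (fun t => cos t ^ S (S (2 * n))) 0 (PI / 2))
    with (1 * RInt (fun t => cos t ^ (2 * n)) 0 (PI / 2) - 1 * RInt (fun t => cos t ^ S (S (2 * n))) 0 (PI / 2)) by ring.
  rewrite <- (RInt_lin (fun t => cos t ^ (2 * n)) (fun t => cos t ^ S (S (2 * n)))); [| apply ex_cos | apply ex_cos].
  pose proof PI_RGT_0.
  apply RInt_le; [lra | apply ex_J | apply ex_lin; apply ex_cos |].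
  intros x hx. destruct (cos_01 x) as [h1 h2]; [lra|].
  pose proof (tcos x ltac:(lra)) as ht.
  assert (hs : sin x * sin x = 1 - cos x * cos x) by (pose proof (sin2_cos2 x); unfold Rsqr in *; lra).
  assert (x * cos x * (x * cos x) <= sin x * sin x).
  { apply Rmult_le_compat; try lra; apply Rmult_le_pos; lra. }
  pose proof (pow_le (cos x) (2 * n) h1).
  assert (E1 : x ^ 2 * cos x ^ S (S (2 * n)) = (x * cos x * (x * cos x)) * cos x ^ (2 * n)) by (simpl; ring).
  assert (E2 : 1 * cos x ^ (2 * n) - 1 * cos x ^ S (S (2 * n)) = (sin x * sin x) * cos x ^ (2 * n)) by (rewrite hs; simpl; ring).
  rewrite E1, E2. apply Rmult_le_compat_r; assumption.
Qed.

Definition q (n : nat) : R := Jc n / Ic (2 * n).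

Lemma Ic_even_pos n : 0 < Ic (2 * n).
Proof. rewrite Ic_even. pose proof (a_pos n). pose proof PI_RGT_0. nra. Qed.

Lemma q_step n : q n - q (S n) = 1 / (2 * (INR n + 1) ^ 2).
Proof.
  unfold q. pose proof (J_rec n) as h1. pose proof (Ic_rec (2 * n)) as h2.
  pose proof (Ic_even_pos n). pose proof (Ic_even_pos (S n)).
  replace (2 * S n)%nat with (S (S (2 * n))) in * by lia.
  rewrite mult_INR in h2. replace (INR 2) with 2 in h2 by (simpl; ring).
  pose proof (pos_INR n).
  set (I0 := Ic (2 * n)) in *. set (I1 := Ic (S (S (2 * n)))) in *.
  assert (HJ : Jc (S n) = ((INR n + 1) * (2 * INR n + 1) * Jc n - I1) / (2 * (INR n + 1) ^ 2)).
  { apply (Rmult_eq_reg_l (2 * (INR n + 1) ^ 2)); [| nra]. field_simplify; [lra | lra]. }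
  assert (HI : I1 = (2 * INR n + 1) / (2 * INR n + 2) * I0).
  { apply (Rmult_eq_reg_l (2 * INR n + 2)); [| lra]. field_simplify; lra. }
  rewrite HJ, HI. field. repeat split; lra.
Qed.

Lemma Z_q n : Z n = 2 * (q 0 - q n).
Proof.
  induction n as [|n IH].
  - simpl. ring.
  - rewrite Z_S, IH. pose proof (q_step n) as hq. pose proof (pos_INR n) as hn.
    assert (hq2 : q (S n) = q n - 1 / (2 * (INR n + 1) ^ 2)) by lra. rewrite hq2. field. lra.
Qed.

Lemma q0 : q 0 = PI ^ 2 / 12.
Proof.
  unfold q. change (2 * 0)%nat with 0%nat. rewrite J0, Ic0. pose proof PI_RGT_0. field. lra.
Qed.

Lemma q_bound n : 0 <= q (S n) <= 1 / (2 * INR n + 1).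
Proof.
  unfold q. pose proof (J_upper n). pose proof (J_nonneg (S n)).
  pose proof (Ic_even_pos n). pose proof (Ic_even_pos (S n)).
  pose proof (Ic_rec (2 * n)) as h2. rewrite mult_INR in h2. replace (INR 2) with 2 in h2 by (simpl; ring).
  replace (2 * S n)%nat with (S (S (2 * n))) in * by lia.
  pose proof (pos_INR n).
  set (I0 := Ic (2 * n)) in *. set (I1 := Ic (S (S (2 * n)))) in *.
  split.
  - apply Rdiv_le_0_compat; lra.
  - assert (HI : I0 = (2 * INR n + 2) / (2 * INR n + 1) * I1).
    { apply (Rmult_eq_reg_l (2 * INR n + 1)); [| lra]. field_simplify; lra. }
    apply (Rmult_le_reg_r I1); [lra|]. unfold Rdiv at 1. rewrite Rmult_assoc, Rinv_l, Rmult_1_r by lra.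
    apply Rle_trans with (I0 - I1); [lra|]. rewrite HI. right. field. lra.
Qed.

Lemma basel : Un_cv Z (PI ^ 2 / 6).
Proof.
  apply (squeeze Z (fun n => 4 / (INR n + 1)) _ 1); [| apply inv_cv].
  intros n hn. destruct n as [|m]; [lia|].
  rewrite Z_q, q0. pose proof (q_bound m). pose proof (pos_INR m).
  replace (2 * (PI ^ 2 / 12 - q (S m)) - PI ^ 2 / 6) with (- (2 * q (S m))) by field.
  rewrite Rabs_Ropp, Rabs_right by lra. rewrite S_INR.
  apply Rle_trans with (2 * (1 / (2 * INR m + 1))); [lra|].
  apply Rmult_le_reg_r with ((2 * INR m + 1) * (INR m + 1 + 1)); [nra|].
  field_simplify; nra.
Qed.

Lemma rhs_lim : Un_cv (fun n => c n * Z n / 4) (PI / 12).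
Proof.
  replace (PI / 12) with (2 / PI * (PI ^ 2 / 6) * / 4) by (pose proof PI_RGT_0; field; lra).
  apply (CV_mult _ (fun _ => / 4)); [apply CV_mult; [apply wallis | apply basel] |].
  intros eps he. exists 0%nat. intros. unfold Rdist. rewrite Rminus_diag, Rabs_R0. lra.
Qed.

Lemma key_poly x h : 1 <= x -> 3/4 <= h ->
  (4*x+5)*(2*x+1)^3*(h*(2*x+1)^2*(2*x+2)^2 + (2*x+2)^2 - (2*x+1)^2) <= (4*x+1)*h*(2*x+2)^5*(2*x+1)^2.
Proof.
  intros hx hh.
  assert (P : 0 <= 3/4*(2*x+2)^2*(16*x^3+36*x^2+22*x+3) - (4*x+5)*(2*x+1)*(4*x+3)) by nra.
  assert (Q : 0 <= (2*x+1)^2*(2*x+2)^2*(16*x^3+36*x^2+22*x+3)) by (apply Rmult_le_pos; [nra| nra]).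
  assert (E : (4*x+1)*h*(2*x+2)^5*(2*x+1)^2 - (4*x+5)*(2*x+1)^3*(h*(2*x+1)^2*(2*x+2)^2 + (2*x+2)^2 - (2*x+1)^2)
     = h * ((2*x+1)^2*(2*x+2)^2*(16*x^3+36*x^2+22*x+3)) - (4*x+5)*(2*x+1)^3*(4*x+3)) by ring.
  assert (0 <= h * ((2*x+1)^2*(2*x+2)^2*(16*x^3+36*x^2+22*x+3)) - (4*x+5)*(2*x+1)^3*(4*x+3)); [|lra].
  apply Rle_trans with (3/4 * ((2*x+1)^2*(2*x+2)^2*(16*x^3+36*x^2+22*x+3)) - (4*x+5)*(2*x+1)^3*(4*x+3)).
  - assert (E2 : 3/4 * ((2*x+1)^2*(2*x+2)^2*(16*x^3+36*x^2+22*x+3)) - (4*x+5)*(2*x+1)^3*(4*x+3)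
       = (2*x+1)^2 * (3/4*(2*x+2)^2*(16*x^3+36*x^2+22*x+3) - (4*x+5)*(2*x+1)*(4*x+3))) by ring.
    rewrite E2. apply Rmult_le_pos; [nra | exact P].
  - nra.
Qed.

Lemma H_bounds k : 3/4 <= - H (S k) <= 1 - 1 / (4 * (INR k + 1)).
Proof.
  induction k as [|k IH].
  - rewrite H_S. simpl. lra.
  - rewrite H_S. rewrite S_INR. pose proof (pos_INR k).
    assert (e1 : 0 <= 1 / (2 * (INR k + 1) + 1) ^ 2 - 1 / (2 * (INR k + 1) + 2) ^ 2).
    { assert (1 / (2 * (INR k + 1) + 2) ^ 2 <= 1 / (2 * (INR k + 1) + 1) ^ 2); [|lra].
      apply Rmult_le_compat_l; [lra|]. apply Rinv_le_contravar; nra. }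
    assert (e2 : 1 / (2 * (INR k + 1) + 1) ^ 2 - 1 / (2 * (INR k + 1) + 2) ^ 2
                 <= 1 / (4 * (INR k + 1)) - 1 / (4 * (INR k + 1 + 1))).
    { replace (1 / (4 * (INR k + 1)) - 1 / (4 * (INR k + 1 + 1))) with (1 / (4 * (INR k + 1) * (INR k + 2))) by (field; lra).
      assert (1 / (2 * (INR k + 1) + 1) ^ 2 <= 1 / (4 * (INR k + 1) * (INR k + 2))).
      { apply Rmult_le_compat_l; [lra|]. apply Rinv_le_contravar; nra. }
      assert (0 <= 1 / (2 * (INR k + 1) + 2) ^ 2) by (unfold Rdiv; apply Rmult_le_pos; [lra | apply Rlt_le, Rinv_0_lt_compat; nra]).
      lra. }
    lra.
Qed.

Lemma H_range k : -1 <= H k <= 0.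
Proof.
  destruct k as [|k]; [simpl; lra|]. pose proof (H_bounds k). pose proof (pos_INR k).
  assert (0 < 1 / (4 * (INR k + 1))) by (apply Rdiv_lt_0_compat; lra). lra.
Qed.

Lemma c_le1 n : c n <= 1.
Proof.
  induction n as [|n IH].
  - unfold c. rewrite a0. simpl. lra.
  - rewrite c_S. unfold rho. pose proof (pos_INR n).
    assert (0 <= c n) by (unfold c; pose proof (a_pos n); nra).
    assert ((2 * INR n + 1) * (2 * INR n + 3) / (4 * (INR n + 1) ^ 2) <= 1).
    { apply Rmult_le_reg_r with (4 * (INR n + 1) ^ 2); [nra|].
      unfold Rdiv. rewrite Rmult_assoc, Rinv_l, Rmult_1_r by nra. nra. }
    nra.
Qed.

Definition V (k : nat) : R := - (4 * INR k + 1) * a k ^ 3 * H k.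
Definition u (k : nat) : R := (4 * INR k + 1) * E k * H k.

Lemma V_nonneg k : 0 <= V k.
Proof.
  unfold V. pose proof (H_range k) as hr. pose proof (a_pos k) as hak. pose proof (pos_INR k) as hk0.
  assert (ha3 : 0 < a k ^ 3) by (apply pow_lt; lra).
  assert (h4 : 0 <= (4 * INR k + 1) * a k ^ 3) by nra. nra.
Qed.

Lemma V_decr i : V (S (S i)) <= V (S i).
Proof.
  unfold V. set (k := S i).
  rewrite H_S, a_S, S_INR.
  assert (hx : 1 <= INR k) by (unfold k; rewrite S_INR; pose proof (pos_INR i); lra).
  pose proof (H_bounds i) as hb. fold k in hb.
  set (h := - H k) in *. set (x := INR k) in *. pose proof (a_pos k) as ha. set (A := a k) in *.
  replace (H k) with (- h) by (unfold h; ring).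
  pose proof (key_poly x h hx (proj1 hb)) as kp.
  assert (hA3 : 0 < A ^ 3) by (apply pow_lt; lra).
  replace (- (4 * (x + 1) + 1) * (A * (1 / 2 + x) / (x + 1)) ^ 3 * (- h + 1 / (2 * x + 2) ^ 2 - 1 / (2 * x + 1) ^ 2))
    with (A ^ 3 * ((4*x+5)*(2*x+1)^3*(h*(2*x+1)^2*(2*x+2)^2 + (2*x+2)^2 - (2*x+1)^2)) / ((2*x+2)^5*(2*x+1)^2)) by (field; lra).
  replace (- (4 * x + 1) * A ^ 3 * - h) with (A ^ 3 * ((4*x+1)*h*(2*x+2)^5*(2*x+1)^2) / ((2*x+2)^5*(2*x+1)^2)) by (field; lra).
  unfold Rdiv. apply Rmult_le_compat_r; [apply Rlt_le, Rinv_0_lt_compat; apply Rmult_lt_0_compat; apply pow_lt; lra|].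
  apply Rmult_le_compat_l; lra.
Qed.

Lemma V_sq k : V k ^ 2 <= 4 / (INR k + 1).
Proof.
  unfold V. pose proof (H_range k) as hr. pose proof (a_pos k) as hak. pose proof (pos_INR k) as hk0.
  pose proof (c_le1 k) as hc. unfold c in hc.
  assert (h1 : (- (4 * INR k + 1) * a k ^ 3 * H k) ^ 2 <= ((4 * INR k + 1) * a k ^ 3) ^ 2).
  { assert (ha3 : 0 < a k ^ 3) by (apply pow_lt; lra).
    replace ((- (4 * INR k + 1) * a k ^ 3 * H k) ^ 2) with (((4 * INR k + 1) * a k ^ 3) ^ 2 * (H k ^ 2)) by ring.
    rewrite <- (Rmult_1_r (((4 * INR k + 1) * a k ^ 3) ^ 2)) at 2.
    apply Rmult_le_compat_l; [nra | nra]. }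
  apply Rle_trans with (1 := h1).
  set (y := (2 * INR k + 1) * a k ^ 2) in *.
  assert (ha2 : a k ^ 2 = y / (2 * INR k + 1)) by (unfold y; field; lra).
  replace (((4 * INR k + 1) * a k ^ 3) ^ 2) with ((4 * INR k + 1) ^ 2 * (a k ^ 2) ^ 3) by ring.
  rewrite ha2.
  assert (hy0 : 0 <= y) by (unfold y; nra).
  assert (hy3 : y ^ 3 <= 1) by (pose proof (pow_incr y 3); simpl in *; nra).
  replace ((4 * INR k + 1) ^ 2 * (y / (2 * INR k + 1)) ^ 3) with (y ^ 3 * ((4 * INR k + 1) ^ 2 / (2 * INR k + 1) ^ 3)) by (field; lra).
  apply Rle_trans with ((4 * INR k + 1) ^ 2 / (2 * INR k + 1) ^ 3).
  - rewrite <- (Rmult_1_l ((4 * INR k + 1) ^ 2 / (2 * INR k + 1) ^ 3)) at 2.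
    apply Rmult_le_compat_r; [|lra]. unfold Rdiv. apply Rmult_le_pos; [nra|]. apply Rlt_le, Rinv_0_lt_compat, pow_lt; lra.
  - apply Rmult_le_reg_r with ((2 * INR k + 1) ^ 3 * (INR k + 1)); [apply Rmult_lt_0_compat; [apply pow_lt|]; lra|].
    field_simplify; [|lra|lra]. nra.
Qed.

Lemma V_cv : Un_cv V 0.
Proof.
  intros eps he. destruct (inv_cv 4 (eps ^ 2) ltac:(nra)) as [N hN].
  exists N. intros n hn. specialize (hN n hn). unfold Rdist in *. rewrite Rminus_0_r in *.
  pose proof (V_nonneg n). pose proof (V_sq n). pose proof (pos_INR n).
  rewrite Rabs_right in hN by (unfold Rdiv; apply Rle_ge, Rmult_le_pos; [lra | apply Rlt_le, Rinv_0_lt_compat; lra]).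
  rewrite Rabs_right by lra. nra.
Qed.

Lemma u_tg i : u (S i) = tg_alt (fun j => V (S j)) i.
Proof. unfold u, V, tg_alt, E. simpl pow at 1. ring. Qed.

Lemma u0 : u 0 = 0.
Proof. unfold u. simpl H. ring. Qed.

Lemma sum_u_shift N : sum_f_R0 u (S N) = sum_f_R0 (tg_alt (fun j => V (S j))) N.
Proof.
  induction N as [|N IH].
  - simpl. rewrite u0, u_tg. ring.
  - simpl sum_f_R0 at 1. simpl sum_f_R0 in IH. rewrite IH. rewrite u_tg. reflexivity.
Qed.

Lemma cv_shift (w : nat -> R) l : Un_cv (fun N => w (S N)) l -> Un_cv w l.
Proof.
  intros h eps he. destruct (h eps he) as [N hN]. exists (S N). intros n hn.
  destruct n as [|n]; [lia|]. apply hN. lia.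
Qed.

Lemma cv_shift_inv (w : nat -> R) l : Un_cv w l -> Un_cv (fun N => w (S N)) l.
Proof. intros h eps he. destruct (h eps he) as [N hN]. exists N. intros n hn. apply hN. lia. Qed.

Lemma u_conv : { l | Un_cv (sum_f_R0 u) l }.
Proof.
  destruct (alternated_series (fun j => V (S j))) as [l hl].
  - intro i. apply V_decr.
  - apply (cv_shift_inv V 0). apply V_cv.
  - exists l. apply cv_shift. intros eps he. destruct (hl eps he) as [N hN]. exists N.
    intros n hn. rewrite sum_u_shift. apply hN; exact hn.
Qed.

Lemma lam_nonneg n k : 0 <= lam n k.
Proof.
  induction k as [|k IH].
  - simpl; lra.
  - destruct (le_lt_dec n k) as [hk|hk].
    + rewrite lam_zero by lia. lra.
    + rewrite lam_S. assert (INR k < INR n) by (apply lt_INR; lia). pose proof (pos_INR k).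
      unfold Rdiv. apply Rmult_le_pos; [apply Rmult_le_pos; lra|]. apply Rlt_le, Rinv_0_lt_compat. pose proof (pos_INR n). lra.
Qed.

Lemma lam_decr n k : lam n (S k) <= lam n k.
Proof.
  destruct (le_lt_dec n k) as [hk|hk].
  - rewrite (lam_zero n (S k)) by lia. apply lam_nonneg.
  - rewrite lam_S. assert (INR k < INR n) by (apply lt_INR; lia). pose proof (pos_INR k).
    pose proof (lam_nonneg n k).
    assert (hf : (INR n - INR k) / (INR n + 3/2 + INR k) <= 1).
    { apply Rmult_le_reg_r with (INR n + 3/2 + INR k); [lra|]. unfold Rdiv. rewrite Rmult_assoc, Rinv_l, Rmult_1_r by lra. lra. }
    assert (hf0 : 0 <= (INR n - INR k) / (INR n + 3/2 + INR k)).
    { unfold Rdiv. apply Rmult_le_pos; [lra|]. apply Rlt_le, Rinv_0_lt_compat. lra. }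
    unfold Rdiv in *. rewrite Rmult_assoc. nra.
Qed.

Lemma lam_anti n k1 k2 : (k1 <= k2)%nat -> lam n k2 <= lam n k1.
Proof.
  induction 1; [lra|]. pose proof (lam_decr n m). lra.
Qed.

Lemma abel (w lm : nat -> R) N :
  sum_f_R0 (fun k => w k * lm k) N =
  sum_f_R0 (fun k => sum_f_R0 w k * (lm k - lm (S k))) N + sum_f_R0 w N * lm (S N).
Proof.
  induction N as [|N IH].
  - simpl. ring.
  - simpl sum_f_R0. rewrite IH. ring.
Qed.

Lemma weights_sum n m : sum_f_R0 (fun k => lam n k - lam n (S k)) m = 1 - lam n (S m).
Proof.
  rewrite (sum_eq _ (fun k => (fun j => - lam n j) (S k) - (fun j => - lam n j) k)) by (intros; simpl; ring).
  rewrite (tele (fun j => - lam n j)). simpl lam. ring.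
Qed.

Lemma split_bound (d : nat -> R) n K M e m :
  0 <= M -> 0 <= e ->
  (forall k, (k < K)%nat -> Rabs (d k) <= M) ->
  (forall k, (K <= k)%nat -> Rabs (d k) <= e) ->
  sum_f_R0 (fun k => Rabs (d k) * (lam n k - lam n (S k))) m
    <= M * (1 - lam n (Nat.min (S m) K)) + e * (1 - lam n (S m)).
Proof.
  intros hM he h1 h2.
  induction m as [|m IH].
  - replace (sum_f_R0 _ 0) with (Rabs (d 0%nat) * (lam n 0 - lam n 1)) by reflexivity. pose proof (lam_decr n 0) as hw. pose proof (Rabs_pos (d 0%nat)) as hd.
    change (lam n 0) with 1 in *.
    destruct K as [|K].
    + change (Nat.min 1 0) with 0%nat. change (lam n 0) with 1. specialize (h2 0%nat ltac:(lia)).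
      assert (0 <= (e - Rabs (d 0%nat)) * (1 - lam n 1)) by (apply Rmult_le_pos; lra). nra.
    + change (Nat.min 1 (S K)) with 1%nat. specialize (h1 0%nat ltac:(lia)).
      assert (0 <= (M - Rabs (d 0%nat)) * (1 - lam n 1)) by (apply Rmult_le_pos; lra).
      assert (0 <= e * (1 - lam n 1)) by (apply Rmult_le_pos; lra). nra.
  - rewrite tech5. cbv beta. pose proof (lam_decr n (S m)) as hw. pose proof (Rabs_pos (d (S m))).
    destruct (le_lt_dec K (S m)) as [hk|hk].
    + rewrite (Nat.min_r (S (S m)) K) by lia. rewrite (Nat.min_r (S m) K) in IH by lia.
      specialize (h2 (S m) hk).
      assert (Rabs (d (S m)) * (lam n (S m) - lam n (S (S m))) <= e * (lam n (S m) - lam n (S (S m)))) by nra.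
      lra.
    + rewrite (Nat.min_l (S (S m)) K) by lia. rewrite (Nat.min_l (S m) K) in IH by lia.
      specialize (h1 (S m) hk).
      assert (Rabs (d (S m)) * (lam n (S m) - lam n (S (S m))) <= M * (lam n (S m) - lam n (S (S m)))) by nra.
      assert (0 <= e * (lam n (S m) - lam n (S (S m)))) by nra.
      lra.
Qed.

Lemma Un_cv_ext (f g : nat -> R) l : (forall n, f n = g n) -> Un_cv f l -> Un_cv g l.
Proof. intros e h eps he. destruct (h eps he) as [N hN]. exists N. intros n hn. rewrite <- e. auto. Qed.

Lemma lam_lim K : Un_cv (fun n => lam n K) 1.
Proof.
  induction K as [|K IH].
  - intros eps he. exists 0%nat. intros. unfold Rdist. simpl. rewrite Rminus_diag, Rabs_R0. lra.
  - apply (Un_cv_ext (fun n => lam n K * ((INR n - INR K) / (INR n + 3/2 + INR K)))).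
    { intro n. rewrite lam_S. unfold Rdiv. ring. }
    replace 1 with (1 * 1) by ring. apply CV_mult; [exact IH|].
    apply (squeeze _ (fun n => (2 * INR K + 3/2) / (INR n + 1)) _ 0); [| apply inv_cv].
    intros n _. pose proof (pos_INR n). pose proof (pos_INR K).
    replace ((INR n - INR K) / (INR n + 3 / 2 + INR K) - 1) with (- ((2 * INR K + 3/2) / (INR n + 3 / 2 + INR K))) by (field; lra).
    rewrite Rabs_Ropp, Rabs_right.
    + unfold Rdiv. apply Rmult_le_compat_l; [lra|]. apply Rinv_le_contravar; lra.
    + apply Rle_ge. unfold Rdiv. apply Rmult_le_pos; [lra|]. apply Rlt_le, Rinv_0_lt_compat. lra.
Qed.

Lemma sum_ge_term (f : nat -> R) K k : (forall j, 0 <= f j) -> (k <= K)%nat -> f k <= sum_f_R0 f K.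
Proof.
  intros hf. induction 1.
  - destruct k; [simpl; lra|]. rewrite tech5. pose proof (cond_pos_sum f k hf). lra.
  - rewrite tech5. pose proof (hf (S m)). lra.
Qed.

Lemma toeplitz (l : R) : Un_cv (sum_f_R0 u) l -> Un_cv (fun n => sum_f_R0 (fun k => u k * lam n k) n) l.
Proof.
  intros hB eps he.
  destruct (hB (eps/2) ltac:(lra)) as [K hK].
  set (M := sum_f_R0 (fun j => Rabs (sum_f_R0 u j - l)) K).
  assert (hM : 0 <= M) by (apply cond_pos_sum; intros; apply Rabs_pos).
  destruct (lam_lim K (eps / (2 * (M + 1)))) as [N hN].
  { apply Rdiv_lt_0_compat; lra. }
  exists N. intros n hn. specialize (hN n hn). unfold Rdist in *.
  rewrite abel, (lam_zero n (S n)) by lia. rewrite Rmult_0_r, Rplus_0_r.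
  assert (hw : sum_f_R0 (fun k => sum_f_R0 u k * (lam n k - lam n (S k))) n - l =
               sum_f_R0 (fun k => (sum_f_R0 u k - l) * (lam n k - lam n (S k))) n).
  { assert (hs := weights_sum n n). rewrite (lam_zero n (S n)) in hs by lia.
    replace l with (l * sum_f_R0 (fun k => lam n k - lam n (S k)) n) at 1 by (rewrite hs; ring).
    rewrite scal_sum, <- minus_sum. apply sum_eq. intros; ring. }
  rewrite hw.
  eapply Rle_lt_trans; [apply sum_f_R0_triangle|].
  rewrite (sum_eq _ (fun k => Rabs (sum_f_R0 u k - l) * (lam n k - lam n (S k)))).
  2:{ intros k _. rewrite Rabs_mult, (Rabs_right (lam n k - lam n (S k))); [reflexivity|].
      pose proof (lam_decr n k). lra. }
  eapply Rle_lt_trans; [apply (split_bound (fun k => sum_f_R0 u k - l) n K M (eps/2) n hM ltac:(lra))|].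
  - intros k hk. unfold M. apply (sum_ge_term (fun j => Rabs (sum_f_R0 u j - l))); [intros; apply Rabs_pos | lia].
  - intros k hk. apply Rlt_le. apply hK. lia.
  - pose proof (lam_anti n (Nat.min (S n) K) K ltac:(lia)).
    pose proof (lam_nonneg n (S n)).
    pose proof (lam_anti n 0 K ltac:(lia)). change (lam n 0) with 1 in *.
    assert (h1 : 1 - lam n K < eps / (2 * (M + 1))).
    { rewrite Rabs_minus_sym in hN. pose proof (Rle_abs (1 - lam n K)). lra. }
    assert (h2 : M * (1 - lam n K) <= M * (eps / (2 * (M + 1)))) by (apply Rmult_le_compat_l; lra).
    assert (h3 : M * (eps / (2 * (M + 1))) < eps / 2).
    { apply Rmult_lt_reg_r with (2 * (M + 1)); [lra|].
      replace (M * (eps / (2 * (M + 1))) * (2 * (M + 1))) with (M * eps) by (field; lra).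
      nra. }
    assert (h4 : M * (1 - lam n (Nat.min (S n) K)) <= M * (1 - lam n K)) by (apply Rmult_le_compat_l; lra).
    assert (h5 : eps / 2 * (1 - lam n (S n)) <= eps / 2) by nra.
    lra.
Qed.

Lemma inner_H k : sum_f_R0 (fun x => (fun i => (-1) ^ i / INR i ^ 2) (x + 1)%nat) (S (2 * k)) = H (S k).
Proof.
  induction k as [|k IH].
  - simpl. field.
  - replace (S (2 * S k)) with (S (S (S (2 * k)))) by lia.
    rewrite tech5, tech5, IH. cbv beta.
    replace (S (S (2 * k)) + 1)%nat with (S (2 * S k)) by lia.
    replace (S (S (S (2 * k))) + 1)%nat with (2 * S (S k))%nat by lia.
    rewrite pow_1_odd, pow_1_even. rewrite (H_S (S k)).
    rewrite !S_INR, !mult_INR, !S_INR. replace (INR 2) with 2 by (simpl; ring).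
    pose proof (pos_INR k) as hk. simpl (INR 0). field. lra.
Qed.

Lemma inner_sum_H k : inner_sum (S k) = H (S k).
Proof.
  unfold inner_sum, sum_f. replace (2 * S k - 1)%nat with (S (2 * k)) by lia.
  apply inner_H.
Qed.

Lemma term_u k : term (S k) = u (S k).
Proof.
  unfold term, u, E, a. rewrite inner_sum_H.
  assert (0 < INR (fact (S k))) by (apply lt_0_INR, lt_O_fact).
  field. lra.
Qed.

Lemma partial_u N : partial_sum N = sum_f_R0 u N.
Proof.
  induction N as [|N IH].
  - simpl. rewrite u0. ring.
  - simpl partial_sum. rewrite IH, term_u, tech5. reflexivity.
Qed.

Lemma lam_sum n : sum_f_R0 (fun k => u k * lam n k) n = c n * Z n / 4.
Proof.
  rewrite <- I2. rewrite (sum_eq _ (fun k => 4 * H k * F n k * / 4)).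
  - rewrite <- scal_sum. unfold Rdiv. ring.
  - intros k _. unfold u, F. field.
Qed.

Theorem theorem1p1 : Un_cv partial_sum (PI / 12).
Proof.
  destruct u_conv as [l hl].
  assert (h1 := toeplitz l hl).
  assert (h2 : Un_cv (fun n => sum_f_R0 (fun k => u k * lam n k) n) (PI / 12)).
  { apply (Un_cv_ext (fun n => c n * Z n / 4)); [intro n; symmetry; apply lam_sum | apply rhs_lim]. }
  rewrite (UL_sequence _ _ _ h1 h2) in hl.
  apply (Un_cv_ext (sum_f_R0 u)); [intro n; symmetry; apply partial_u | exact hl].
Qed.
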